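(* Let $\mathbb{K}$ be a positive commutative monoid that has the transportation property. For every hypergraph $H$, $H$ is acyclic if and only if $H$ has the local-to-global consistency property for $\mathbb{K}$-relations.
   Context: A commutative monoid $\mathbb{K}=(K,+,0)$ is positive if $p+q=0$ implies $p=q=0$; monoids have at least two elements. $\mathbb{K}$ has the transportation property if for all positive integers $m,n$ and $b\in K^m$, $c\in K^n$ with $b_1+\dots+b_m=c_1+\dots+c_n$ there is $(d_{ij})\in K^{m\times n}$ with row sums $b_i$ and column sums $c_j$. Attributes have domains (arbitrary sets, chosen as needed); for a finite attribute set $X$, an $X$-tuple assigns each attribute a value in its domain; $t[Y]$ is restriction. A $\mathbb{K}$-relation over $X$ is a finitely supported function $R$ from $X$-tuples to $K$; marginals $R[Y](t)=\sum_{r:R(r)\ne0,r[Y]=t}R(r)$. A hypergraph with hyperedges $X_1,\dots,X_m$ (vertices as attributes) has the local-to-global consistency property for $\mathbb{K}$-relations if every collection $R_1(X_1),\dots,R_m(X_m)$ that is pairwise consistent (for all $i,j$ some $W$ over $X_i\cup X_j$ has $W[X_i]=R_i,W[X_j]=R_j$) is globally consistent (some $W$ over $\bigcup_i X_i$ has $W[X_i]=R_i$ for all $i$). A hypergraph is acyclic (Beeri–Fagin–Maier–Yannakakis) iff it has a join tree: a tree on its hyperedges such that for each vertex the hyperedges containing it form a connected subtree. *)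

(* Defs.v *)
From mathcomp Require Import all_boot all_order all_algebra.
Set Implicit Arguments. Unset Strict Implicit. Unset Printing Implicit Defensive.
Import GRing.Theory.
Local Open Scope ring_scope.

Definition nontrivial_monoid (K : nmodType) : Prop := exists p : K, p != 0.

Definition positive_monoid (K : nmodType) : Prop :=
  forall p q : K, p + q = 0 -> p = 0 /\ q = 0.

Definition transportation_property (K : nmodType) : Prop :=
  forall (m n : nat), (0 < m)%N -> (0 < n)%N ->
  forall (b : 'I_m -> K) (c : 'I_n -> K),
    \sum_(i < m) b i = \sum_(j < n) c j ->
    exists d : 'I_m -> 'I_n -> K,
      (forall i, \sum_(j < n) d i j = b i) /\ (forall j, \sum_(i < m) d i j = c j).

Section Relations.
Variables (A : finType) (Dom : A -> eqType).

(* A tuple is a partial assignment: [t a = Some v] with [v] in the domain of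
   [a]; an X-tuple is one defined exactly on the attributes of X. *)
Definition tup := {dffun forall a : A, option (Dom a)}.

Definition is_tuple_over (X : {set A}) (t : tup) : Prop :=
  forall a, (t a != None) = (a \in X).

Definition restr (Y : {set A}) (t : tup) : tup :=
  [ffun a => if a \in Y then t a else None].

Variable K : nmodType.

Definition Krel (X : {set A}) (R : tup -> K) : Prop :=
  (exists s : seq tup, forall t, R t != 0 -> t \in s) /\
  (forall t, R t != 0 -> is_tuple_over X t).

(* W[Y] = R, where the marginal W[Y](t) = sum of W(r) over the support
   elements r of W with r[Y] = t (computed over any duplicate-free list
   covering the support; extra elements contribute 0). *)
Definition marginal_is (W : tup -> K) (Y : {set A}) (R : tup -> K) : Prop :=
  forall s : seq tup, (forall r, W r != 0 -> r \in s) ->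
  forall t, R t = \sum_(r <- undup s | restr Y r == t) W r.

End Relations.

(* trees on 'I_m : symmetric irreflexive, connected, and every edge is a
   bridge (i.e. minimally connected) *)
Definition is_tree (m : nat) (e : rel 'I_m) : Prop :=
  symmetric e /\ irreflexive e /\
  (forall i j : 'I_m, connect e i j) /\
  (forall i j : 'I_m, e i j ->
     ~~ connect (fun x y => e x y && ~~ (((x == i) && (y == j)) || ((x == j) && (y == i)))) i j).

Definition join_tree (A : finType) (m : nat) (X : 'I_m -> {set A}) (e : rel 'I_m)
  : Prop :=
  is_tree e /\
  forall v : A, forall i j : 'I_m, v \in X i -> v \in X j ->
    connect (fun x y => [&& e x y, v \in X x & v \in X y]) i j.

Definition acyclic (A : finType) (m : nat) (X : 'I_m -> {set A}) : Prop :=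
  exists e : rel 'I_m, join_tree X e.

Definition pairwise_consistent (A : finType) (Dom : A -> eqType) (K : nmodType)
  (m : nat) (X : 'I_m -> {set A}) (R : 'I_m -> tup Dom -> K) : Prop :=
  forall i j : 'I_m, exists W : tup Dom -> K,
    Krel (X i :|: X j) W /\ marginal_is W (X i) (R i) /\ marginal_is W (X j) (R j).

Definition globally_consistent (A : finType) (Dom : A -> eqType) (K : nmodType)
  (m : nat) (X : 'I_m -> {set A}) (R : 'I_m -> tup Dom -> K) : Prop :=
  exists W : tup Dom -> K,
    Krel (\bigcup_(i < m) X i) W /\ forall i, marginal_is W (X i) (R i).

Definition local_to_global (K : nmodType) (A : finType) (m : nat)
  (X : 'I_m -> {set A}) : Prop :=
  forall (Dom : A -> eqType) (R : 'I_m -> tup Dom -> K),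
    (forall i, Krel (X i) (R i)) ->
    pairwise_consistent X R -> globally_consistent X R.

(* Main.v *)
Require Import Defs.
From mathcomp Require Import all_boot all_order all_algebra zify.
From Stdlib Require Import ClassicalEpsilon FunctionalExtensionality.
Set Implicit Arguments. Unset Strict Implicit. Unset Printing Implicit Defensive.
Import GRing.Theory.
Local Open Scope ring_scope.

Section General.
Variables (A : finType) (Dom : A -> eqType) (K : nmodType).
Local Notation T := (tup Dom).

Definition cover (W : T -> K) (s : seq T) := forall r, W r != 0 -> r \in s.

Lemma restrE (Y : {set A}) (t : T) a : restr Y t a = if a \in Y then t a else None.
Proof. by rewrite /restr ffunE. Qed.

Lemma restr_restr (Y Z : {set A}) (t : T) : restr Z (restr Y t) = restr (Z :&: Y) t.
Proof.
apply/ffunP=> a; rewrite !restrE inE.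
by case: (a \in Z); case: (a \in Y).
Qed.

Lemma restr_sub (Y Z : {set A}) (t : T) : Z \subset Y -> restr Z (restr Y t) = restr Z t.
Proof. by move=> sZY; rewrite restr_restr (setIidPl sZY). Qed.

Lemma restr_over (X Y : {set A}) (t : T) :
  is_tuple_over X t -> is_tuple_over (X :&: Y) (restr Y t).
Proof.
move=> ht a; rewrite restrE !inE.
by case: (a \in Y); rewrite ?andbT ?andbF ?ht //.
Qed.

Lemma restr_id (X : {set A}) (t : T) : is_tuple_over X t -> restr X t = t.
Proof.
move=> ht; apply/ffunP=> a; rewrite restrE -ht.
by case: (t a).
Qed.

Lemma sum_nz (l : seq T) (F : T -> K) :
  \sum_(t <- l) F t = \sum_(t <- l | F t != 0) F t.
Proof.
rewrite [RHS]big_mkcond /=; apply: eq_bigr => t _.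
by case: eqP.
Qed.

Lemma sum_eq_cover (l1 l2 : seq T) (F : T -> K) :
  uniq l1 -> uniq l2 -> (forall t, F t != 0 -> (t \in l1) && (t \in l2)) ->
  \sum_(t <- l1) F t = \sum_(t <- l2) F t.
Proof.
move=> u1 u2 H.
rewrite sum_nz [RHS]sum_nz -[LHS]big_filter -[RHS]big_filter; apply: perm_big; apply: uniq_perm; rewrite ?filter_uniq //.
move=> t; rewrite !mem_filter; case Ht: (F t != 0) => //=.
by case/andP: (H t Ht) => -> ->.
Qed.

Lemma sum_witness (l : seq T) (P : pred T) (F : T -> K) :
  \sum_(r <- l | P r) F r != 0 -> exists2 r, r \in l & P r && (F r != 0).
Proof.
move=> H; apply/hasP; apply: contra_neqT H => /hasPn Hn.
rewrite big1_seq // => r /andP[e rs]; move: (Hn r rs); rewrite e /=.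
by move/negPn/eqP.
Qed.

Definition marg (W : T -> K) (s : seq T) (Y : {set A}) (t : T) :=
  \sum_(r <- undup s | restr Y r == t) W r.

Lemma marg_cover (W : T -> K) s s' Y t : cover W s -> cover W s' ->
  marg W s Y t = marg W s' Y t.
Proof.
move=> c c'; rewrite /marg big_mkcond [RHS]big_mkcond /=.
apply: sum_eq_cover; rewrite ?undup_uniq // => r.
case: (restr Y r == t); last by rewrite eqxx.
move=> Hr; by rewrite !mem_undup (c _ Hr) (c' _ Hr).
Qed.

Lemma marginal_isP (W : T -> K) s Y R : cover W s ->
  marginal_is W Y R <-> (forall t, R t = marg W s Y t).
Proof.
move=> c; split; first by move=> H t; apply: H.
by move=> H s' c' t; rewrite H (marg_cover _ _ c c').
Qed.

Lemma Krel_cover X (W : T -> K) : Krel X W -> exists s, cover W s.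
Proof. by case. Qed.

Lemma marg_Krel X (W : T -> K) s Y : Krel X W -> cover W s ->
  Krel (X :&: Y) (marg W s Y) /\ cover (marg W s Y) (map (restr Y) s).
Proof.
move=> [_ hX] c.
have cv : cover (marg W s Y) (map (restr Y) s).
  move=> t; rewrite /marg => H.
  have [r rs /andP[/eqP <- Wr]] := sum_witness H.
  by apply: map_f; rewrite -mem_undup.
split=> //; split; first by exists (map (restr Y) s).
move=> t; rewrite /marg => H.
have [r rs /andP[/eqP <- Wr]] := sum_witness H.
by apply: restr_over; apply: hX.
Qed.

Lemma marg_exists X (W : T -> K) Y : Krel X W ->
  exists M, Krel (X :&: Y) M /\ marginal_is W Y M.
Proof.
move=> kW; have [s c] := Krel_cover kW.
exists (marg W s Y); split; first by case: (marg_Krel Y kW c).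
by apply/(marginal_isP _ _ c).
Qed.

Lemma marginal_unique (W : T -> K) Y M M' : (exists s, cover W s) ->
  marginal_is W Y M -> marginal_is W Y M' -> M = M'.
Proof.
move=> [s c] /(marginal_isP _ _ c) H /(marginal_isP _ _ c) H'.
by apply: functional_extensionality => t; rewrite H H'.
Qed.

Lemma marg_trans (W : T -> K) s (Y Z : {set A}) R M : cover W s -> Z \subset Y ->
  marginal_is W Y R -> marginal_is R Z M -> marginal_is W Z M.
Proof.
move=> c sZY /(marginal_isP _ _ c) HR.
have cR : cover R (map (restr Y) s).
  move=> t; rewrite HR /marg => H.
  have [r rs /andP[/eqP <- Wr]] := sum_witness H.
  by apply: map_f; rewrite -mem_undup.
move/(marginal_isP _ _ cR) => HM; apply/(marginal_isP _ _ c) => t.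
rewrite HM /marg.
under eq_bigr => u _ do rewrite HR /marg big_mkcond /=.
rewrite exchange_big /= [RHS]big_mkcond /=; apply: eq_big_seq => r rs.
rewrite big_mkcond (bigD1_seq (restr Y r)) ?undup_uniq //=; last first.
  by rewrite mem_undup; apply: map_f; rewrite -mem_undup.
rewrite eqxx restr_sub // big1 ?addr0 // => i /negPf ne.
by case: ifP => // _; rewrite (eq_sym (restr Y r)) ne.
Qed.


Lemma pos_sum (l : seq T) (P : pred T) (F : T -> K) : positive_monoid K ->
  \sum_(i <- l | P i) F i = 0 -> forall i, i \in l -> P i -> F i = 0.
Proof.
move=> pK; elim: l => [|x l IH] //; rewrite big_cons.
case Px: (P x) => H0 i; rewrite inE => /orP[/eqP->|il] Pi //.
- by case: (pK _ _ H0).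
- by case: (pK _ _ H0) => _ H; apply: IH.
- by rewrite Px in Pi.
- by apply: IH.
Qed.

Lemma transport_seq (lb lc : seq T) (f g : T -> K) : transportation_property K ->
  uniq lb -> uniq lc -> lb != [::] -> lc != [::] ->
  \sum_(r <- lb) f r = \sum_(r <- lc) g r ->
  exists d : T -> T -> K,
    (forall r1, r1 \in lb -> \sum_(r2 <- lc) d r1 r2 = f r1) /\
    (forall r2, r2 \in lc -> \sum_(r1 <- lb) d r1 r2 = g r2).
Proof.
move=> trK ub uc nb nc Hs.
have [t0 _] : exists t0, t0 \in lb by case: (lb) nb => // x ? _; exists x; rewrite inE eqxx.
have m0 : (0 < size lb)%N by case: (lb) nb.
have n0 : (0 < size lc)%N by case: (lc) nc.
set m := size lb in m0 *; set n := size lc in n0 *.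
have [d' [Hr Hc]] := trK m n m0 n0 (fun i => f (nth t0 lb i)) (fun j => g (nth t0 lc j))
  (etrans (etrans (esym (big_mkord xpredT (fun i => f (nth t0 lb i)))) (esym (big_nth t0 xpredT f)))
    (etrans Hs (etrans (big_nth t0 xpredT g) (big_mkord xpredT (fun j => g (nth t0 lc j)))))).
exists (fun r1 r2 => if (insub (index r1 lb) : option 'I_m) is Some i then
                 if (insub (index r2 lc) : option 'I_n) is Some j then d' i j else 0 else 0).
split.
  move=> r1 r1b; have ib : (index r1 lb < m)%N by rewrite index_mem.
  have -> : (insub (index r1 lb) : option 'I_m) = Some (Ordinal ib) by apply: (valK (Ordinal ib)).
  have -> : f r1 = f (nth t0 lb (Ordinal ib)) by rewrite /= nth_index.
  rewrite (big_nth t0) big_mkord -Hr.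
  apply: eq_bigr => j _; rewrite index_uniq //.
  by rewrite (valK j).
move=> r2 r2c; have ic : (index r2 lc < n)%N by rewrite index_mem.
have H2 : (insub (index r2 lc) : option 'I_n) = Some (Ordinal ic) by apply: (valK (Ordinal ic)).
have -> : g r2 = g (nth t0 lc (Ordinal ic)) by rewrite /= nth_index.
rewrite (big_nth t0) big_mkord -Hc.
apply: eq_bigr => i _; rewrite index_uniq // (valK i).
by rewrite H2.
Qed.


Definition joint (Y1 : {set A}) (r1 r2 : T) : T :=
  [ffun a => if a \in Y1 then r1 a else r2 a].

Definition overb (X : {set A}) (t : T) := [forall a, (t a != None) == (a \in X)].

Lemma overbP X t : reflect (is_tuple_over X t) (overb X t).
Proof.
apply: (iffP forallP) => H a; first by have /eqP := H a.
by rewrite H.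
Qed.

Lemma joint_restr1 (Y1 : {set A}) (r1 r2 : T) : is_tuple_over Y1 r1 -> restr Y1 (joint Y1 r1 r2) = r1.
Proof.
move=> h; apply/ffunP => a; rewrite restrE /joint ffunE.
by case: ifP => // aY; move: (h a); rewrite aY; case: (r1 a).
Qed.

Lemma joint_restr2 (Y1 Y2 : {set A}) (r1 r2 : T) : is_tuple_over Y2 r2 ->
  restr (Y1 :&: Y2) r1 = restr (Y1 :&: Y2) r2 -> restr Y2 (joint Y1 r1 r2) = r2.
Proof.
move=> h e; apply/ffunP => a; rewrite restrE /joint ffunE.
case: ifP => aY2; last by move: (h a); rewrite aY2; case: (r2 a).
case: ifP => // aY1.
have := congr1 (fun f : T => f a) e; rewrite !restrE inE aY1 aY2 //.
Qed.

Lemma joint_restrZ (Y1 Z : {set A}) (r1 r2 : T) : Z \subset Y1 -> restr Z (joint Y1 r1 r2) = restr Z r1.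
Proof.
move=> sZ; apply/ffunP => a; rewrite !restrE /joint ffunE.
by case: ifP => // aZ; rewrite (subsetP sZ a aZ).
Qed.

Lemma joint_over (Y1 Y2 : {set A}) (r1 r2 : T) : is_tuple_over Y1 r1 -> is_tuple_over Y2 r2 ->
  is_tuple_over (Y1 :|: Y2) (joint Y1 r1 r2).
Proof.
move=> h1 h2 a; rewrite /joint ffunE inE.
by case: ifP => aY1; rewrite ?h1 ?h2.
Qed.

Lemma joint_restr (Y1 Y2 : {set A}) (t : T) : is_tuple_over (Y1 :|: Y2) t ->
  joint Y1 (restr Y1 t) (restr Y2 t) = t.
Proof.
move=> h; apply/ffunP => a; rewrite /joint ffunE !restrE.
case aY1: (a \in Y1) => //; case aY2: (a \in Y2) => //.
by move: (h a); rewrite inE aY1 aY2; case: (t a).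
Qed.

Section Glue.
Variables (Y1 Y2 : {set A}) (W1 W2 M : T -> K) (s1 s2 : seq T).
Hypotheses (pK : positive_monoid K) (trK : transportation_property K).
Hypotheses (c1 : cover W1 s1) (c2 : cover W2 s2).
Hypotheses (h1 : forall t, W1 t != 0 -> is_tuple_over Y1 t)
           (h2 : forall t, W2 t != 0 -> is_tuple_over Y2 t).
Let Z := Y1 :&: Y2.
Hypotheses (m1 : forall u, M u = marg W1 s1 Z u) (m2 : forall u, M u = marg W2 s2 Z u).

Let B u := [seq r <- undup s1 | (restr Z r == u) && (W1 r != 0)].
Let C u := [seq r <- undup s2 | (restr Z r == u) && (W2 r != 0)].

Lemma sumB u : \sum_(r <- B u) W1 r = M u.
Proof.
rewrite m1 /marg big_filter big_mkcond [RHS]big_mkcond /=; apply: eq_bigr => r _.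
by case: (restr Z r == u) => //=; case: eqP.
Qed.

Lemma sumC u : \sum_(r <- C u) W2 r = M u.
Proof.
rewrite m2 /marg big_filter big_mkcond [RHS]big_mkcond /=; apply: eq_bigr => r _.
by case: (restr Z r == u) => //=; case: eqP.
Qed.

Lemma exists_D u : exists d : T -> T -> K,
    (forall r1, r1 \in B u -> \sum_(r2 <- C u) d r1 r2 = W1 r1) /\
    (forall r2, r2 \in C u -> \sum_(r1 <- B u) d r1 r2 = W2 r2).
Proof.
have E := etrans (sumB u) (esym (sumC u)).
case eB: (B u == [::]); case eC: (C u == [::]).
- by exists (fun _ _ => 0); rewrite (eqP eB) (eqP eC).
- exfalso; move: eC => /negbT; case eCu: (C u) => [|r l] // _.
  have : r \in C u by rewrite eCu inE eqxx.
  have Hz : \sum_(r <- C u) W2 r = 0 by rewrite -E (eqP eB) big_nil.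
  move=> rC; have := pos_sum pK Hz rC erefl.
  by move: rC; rewrite mem_filter => /andP[/andP[_ /eqP]].
- exfalso; move: eB => /negbT; case eBu: (B u) => [|r l] // _.
  have : r \in B u by rewrite eBu inE eqxx.
  have Hz : \sum_(r <- B u) W1 r = 0 by rewrite E (eqP eC) big_nil.
  move=> rB; have := pos_sum pK Hz rB erefl.
  by move: rB; rewrite mem_filter => /andP[/andP[_ /eqP]].
- apply: transport_seq => //; rewrite ?filter_uniq ?undup_uniq ?eB ?eC //.
Qed.

Lemma exists_DD : exists D : T -> T -> T -> K, forall u,
    (forall r1, r1 \in B u -> \sum_(r2 <- C u) D u r1 r2 = W1 r1) /\
    (forall r2, r2 \in C u -> \sum_(r1 <- B u) D u r1 r2 = W2 r2).
Proof.
exists (fun u => proj1_sig (constructive_indefinite_description _ (exists_D u))).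
by move=> u; case: (constructive_indefinite_description _ (exists_D u)).
Qed.

Variable D : T -> T -> T -> K.
Hypothesis HD : forall u,
    (forall r1, r1 \in B u -> \sum_(r2 <- C u) D u r1 r2 = W1 r1) /\
    (forall r2, r2 \in C u -> \sum_(r1 <- B u) D u r1 r2 = W2 r2).

Definition Wg (t : T) : K :=
  if [&& overb (Y1 :|: Y2) t, restr Y1 t \in B (restr Z t) & restr Y2 t \in C (restr Z t)]
  then D (restr Z t) (restr Y1 t) (restr Y2 t) else 0.

Lemma Wg_nz t : Wg t != 0 ->
  [/\ is_tuple_over (Y1 :|: Y2) t, restr Y1 t \in B (restr Z t) & restr Y2 t \in C (restr Z t)].
Proof.
rewrite /Wg; case: ifP => [/and3P[/overbP o b c] _ | _]; last by rewrite eqxx.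
by [].
Qed.

Let sW := [seq joint Y1 r1 r2 | r1 <- undup s1, r2 <- undup s2].

Lemma sZ1 : Z \subset Y1. Proof. exact: subsetIl. Qed.
Lemma sZ2 : Z \subset Y2. Proof. exact: subsetIr. Qed.

Lemma Wg_cover : cover Wg sW.
Proof.
move=> t /Wg_nz [o b c].
rewrite -(joint_restr o); apply: allpairs_f.
  by move: b; rewrite mem_filter => /andP[].
by move: c; rewrite mem_filter => /andP[].
Qed.

Lemma Wg_Krel : Krel (Y1 :|: Y2) Wg.
Proof.
split; first by exists sW; apply: Wg_cover.
by move=> t /Wg_nz [].
Qed.

Lemma inB u r : r \in B u -> [/\ r \in undup s1, restr Z r = u, W1 r != 0 & is_tuple_over Y1 r].
Proof. by rewrite mem_filter => /andP[/andP[/eqP e w] rs]; split => //; apply: h1. Qed.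

Lemma inC u r : r \in C u -> [/\ r \in undup s2, restr Z r = u, W2 r != 0 & is_tuple_over Y2 r].
Proof. by rewrite mem_filter => /andP[/andP[/eqP e w] rs]; split => //; apply: h2. Qed.

Lemma Wg_marg1 r1 : W1 r1 = marg Wg sW Y1 r1.
Proof.
set u := restr Z r1.
case rB: (r1 \in B u); last first.
  have -> : W1 r1 = 0.
    apply/eqP; apply: contraFT rB => w; rewrite mem_filter w eqxx /= mem_undup.
    exact: c1.
  rewrite /marg big1 // => t /eqP e; apply/eqP; apply: contraFT rB => /Wg_nz [_ b _].
  by rewrite /u -e (restr_sub _ sZ1).
have [r1s _ w1 o1] := inB rB.
rewrite /marg big_mkcond /=.
rewrite (sum_eq_cover (l2 := map (joint Y1 r1) (C u))) ?undup_uniq //.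
- rewrite big_map -((HD u).1 r1 rB); apply: eq_big_seq => r2 r2C.
  have [_ e2 _ o2] := inC r2C.
  have e12 : restr Z r1 = restr Z r2 by rewrite e2.
  rewrite (joint_restr1 r2 o1) eqxx /Wg (joint_restrZ _ _ sZ1) (joint_restr1 r2 o1).
  rewrite (joint_restr2 o2 e12) -/u rB r2C.
  by rewrite (introT (overbP _ _) (joint_over o1 o2)).
- rewrite map_inj_in_uniq ?filter_uniq ?undup_uniq // => x y xC yC e.
  have [_ ex _ ox] := inC xC; have [_ ey _ oy] := inC yC.
  have := congr1 (restr Y2) e.
  by rewrite (joint_restr2 ox) ?ex // (joint_restr2 oy) ?ey.
- move=> t; case: (restr Y1 t =P r1) => [e|_]; last by rewrite eqxx.
  move=> /[dup] /Wg_cover ts /Wg_nz [o b c].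
  rewrite mem_undup ts /=.
  rewrite -(joint_restr o) e; apply: map_f.
  by rewrite /u -e (restr_sub _ sZ1).
Qed.

Lemma Wg_marg2 r2 : W2 r2 = marg Wg sW Y2 r2.
Proof.
set u := restr Z r2.
case rC: (r2 \in C u); last first.
  have -> : W2 r2 = 0.
    apply/eqP; apply: contraFT rC => w; rewrite mem_filter w eqxx /= mem_undup.
    exact: c2.
  rewrite /marg big1 // => t /eqP e; apply/eqP; apply: contraFT rC => /Wg_nz [_ _ c].
  by rewrite /u -e (restr_sub _ sZ2).
have [r2s _ w2 o2] := inC rC.
rewrite /marg big_mkcond /=.
rewrite (sum_eq_cover (l2 := map (fun r1 => joint Y1 r1 r2) (B u))) ?undup_uniq //.
- rewrite big_map -((HD u).2 r2 rC); apply: eq_big_seq => r1 r1B.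
  have [_ e1 _ o1] := inB r1B.
  have e12 : restr Z r1 = restr Z r2 by rewrite e1.
  rewrite (joint_restr2 o2 e12) eqxx /Wg (joint_restrZ _ _ sZ1) (joint_restr1 r2 o1).
  rewrite (joint_restr2 o2 e12) e1 r1B rC.
  by rewrite (introT (overbP _ _) (joint_over o1 o2)).
- rewrite map_inj_in_uniq ?filter_uniq ?undup_uniq // => x y xB yB e.
  have [_ ex _ ox] := inB xB; have [_ ey _ oy] := inB yB.
  have := congr1 (restr Y1) e.
  by rewrite !joint_restr1.
- move=> t; case: (restr Y2 t =P r2) => [e|_]; last by rewrite eqxx.
  move=> /[dup] /Wg_cover ts /Wg_nz [o b c].
  rewrite mem_undup ts /=.
  rewrite -(joint_restr o) e; apply: (map_f (fun r1 => joint Y1 r1 r2)).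
  by rewrite /u -e (restr_sub _ sZ2).
Qed.

End Glue.

Lemma glue (Y1 Y2 : {set A}) (W1 W2 M : T -> K) :
  positive_monoid K -> transportation_property K -> Krel Y1 W1 -> Krel Y2 W2 ->
  marginal_is W1 (Y1 :&: Y2) M -> marginal_is W2 (Y1 :&: Y2) M ->
  exists W, Krel (Y1 :|: Y2) W /\ marginal_is W Y1 W1 /\ marginal_is W Y2 W2.
Proof.
move=> pK trK [[s1 c1] h1] [[s2 c2] h2] /(marginal_isP _ _ c1) m1 /(marginal_isP _ _ c2) m2.
have [D HD] := exists_DD pK trK m1 m2.
exists (Wg Y1 Y2 W1 W2 s1 s2 D); split; first exact: Wg_Krel.
split; apply/(marginal_isP _ _ (@Wg_cover _ _ _ _ _ _ D)).
  exact: (Wg_marg1 c1 h1 h2 HD).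
exact: (Wg_marg2 c2 h1 h2 HD).
Qed.

End General.

Section Fwd.
Variables (A : finType) (Dom : A -> eqType) (K : nmodType).
Local Notation T := (tup Dom).

Lemma marg_self (X : {set A}) (W : T -> K) : Krel X W -> marginal_is W X W.
Proof.
move=> [[s c] h]; apply/(marginal_isP _ _ c) => t; rewrite /marg.
rewrite big_mkcond /=.
have -> : \sum_(i <- undup s) (if restr X i == t then W i else 0) =
          \sum_(i <- undup s | i == t) W i.
  rewrite [RHS]big_mkcond; apply: eq_bigr => r _.
  case: (W r =P 0) => [->|/eqP nz]; first by case: ifP; case: ifP.
  by rewrite (restr_id (h _ nz)).
case ts: (t \in undup s).
  by rewrite -big_filter filter_pred1_uniq ?undup_uniq // big_cons big_nil addr0.
rewrite big1_seq //; last by move=> r /andP[/eqP -> rs]; move: ts; rewrite rs.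
by apply/eqP; apply: contraFT ts => /c; rewrite mem_undup.
Qed.

Lemma Krel0 (X : {set A}) : Krel X (fun _ : T => (0 : K)).
Proof. by split; [exists [::] |]; move=> t; rewrite eqxx. Qed.

End Fwd.

Section Forward.
Variables (K : nmodType) (pK : positive_monoid K) (trK : transportation_property K).
Variables (A : finType) (m : nat) (X : 'I_m -> {set A}) (e : rel 'I_m).
Hypothesis jt : join_tree X e.
Variables (Dom : A -> eqType) (R : 'I_m -> tup Dom -> K).
Hypotheses (HK : forall i, Krel (X i) (R i)) (Hpc : pairwise_consistent X R).

Definition connS (S : {set 'I_m}) :=
  forall i j, i \in S -> j \in S -> connect (fun x y => [&& e x y, x \in S & y \in S]) i j.

Definition consS (S : {set 'I_m}) :=
  exists W : tup Dom -> K, Krel (\bigcup_(i in S) X i) W /\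
    forall i, i \in S -> marginal_is W (X i) (R i).

Lemma esym_ : symmetric e. Proof. by case: jt => [[]]. Qed.

Lemma run_int (S : {set 'I_m}) j k : connS S -> j \in S -> k \notin S -> e j k ->
  (\bigcup_(i in S) X i) :&: X k = X j :&: X k.
Proof.
move=> cS jS kS ejk; have [[sy [irr [_ br]]] jv] := jt.
apply/setP => v; rewrite !inE; apply/andP/andP => -[vU vk]; split => //; last first.
  by apply/bigcupP; exists j.
have [i iS vi] := bigcupP vU.
apply/negPn/negP => vj.
set br' := (fun x y => e x y && ~~ (((x == j) && (y == k)) || ((x == k) && (y == j)))).
have c1 : connect br' k i.
  apply: (connect_sub _ (jv v k i vk vi)) => x y /and3P[exy vx vy].
  apply: connect1; rewrite /br' exy /=.
  apply/negP => /orP[/andP[/eqP xj _]|/andP[_ /eqP yj]].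
    by rewrite -xj vx in vj.
  by rewrite -yj vy in vj.
have c2 : connect br' i j.
  apply: (connect_sub _ (cS i j iS jS)) => x y /and3P[exy xS yS].
  apply: connect1; rewrite /br' exy /=.
  apply/negP => /orP[/andP[_ /eqP yk]|/andP[/eqP xk _]].
    by rewrite -yk yS in kS.
  by rewrite -xk xS in kS.
have : connect br' j k.
  rewrite (sym_connect_sym _) ?(connect_trans c1 c2) //.
  move=> x y; rewrite /br' (sy x y); congr (_ && ~~ _).
  by rewrite orbC andbC [(y == k) && _]andbC.
by move: (br j k ejk); rewrite /br' => /negP.
Qed.


Lemma connS_ext (S : {set 'I_m}) j k : connS S -> j \in S -> e j k -> connS (k |: S).
Proof.
move=> cS jS ejk.
have [[sy _] _] := jt.
set rel' := (fun x y => [&& e x y, x \in k |: S & y \in k |: S]).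
have sym' : symmetric rel'.
  by move=> x y; rewrite /rel' (sy x y); case: (e y x); case: (x \in _); case: (y \in _).
have toj : forall x, x \in k |: S -> connect rel' x j.
  move=> x; rewrite in_setU1 => /orP[/eqP ->|xS].
    by apply: connect1; rewrite /rel' sy ejk !inE eqxx jS orbT.
  apply: (connect_sub _ (cS x j xS jS)) => a b /and3P[eab aS bS].
  by apply: connect1; rewrite /rel' eab !inE aS bS !orbT.
move=> x y xS yS; apply: (connect_trans (toj x xS)).
by rewrite (sym_connect_sym sym') toj.
Qed.

Lemma consS_ext (S : {set 'I_m}) j k : connS S -> consS S -> j \in S -> k \notin S -> e j k ->
  consS (k |: S).
Proof.
move=> cS [W [kW mW]] jS kS ejk.
have ri := run_int cS jS kS ejk.
have [Wjk [kWjk [mj mk]]] := Hpc j k.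
have [M [kM mM]] := marg_exists (X j :&: X k) (HK j).
have [M' [kM' mM']] := marg_exists (X k :&: X j) (HK k).
have [sW cW] := Krel_cover kW.
have [sjk cjk] := Krel_cover kWjk.
have h1 : marginal_is W ((\bigcup_(i in S) X i) :&: X k) M.
  rewrite ri; apply: (marg_trans cW _ (mW j jS) mM); exact: subsetIl.
have e1 : marginal_is Wjk (X j :&: X k) M.
  by apply: (marg_trans cjk _ mj mM); exact: subsetIl.
have e2 : marginal_is Wjk (X j :&: X k) M'.
  by rewrite setIC; apply: (marg_trans cjk _ mk mM'); exact: subsetIl.
have EM : M = M' by apply: (marginal_unique (ex_intro _ sjk cjk) e1 e2).
have h2 : marginal_is (R k) ((\bigcup_(i in S) X i) :&: X k) M.
  by rewrite ri setIC EM.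
have [W' [kW' [m1 m2]]] := glue pK trK kW (HK k) h1 h2.
have [sW' cW'] := Krel_cover kW'.
exists W'; split.
  have -> : \bigcup_(i in k |: S) X i = (\bigcup_(i in S) X i) :|: X k.
    apply/setP => v; apply/bigcupP/setUP => [[i]|[/bigcupP[i iS vi]|vk]].
      by rewrite in_setU1 => /orP[/eqP -> vk|iS vi]; [right|left; apply/bigcupP; exists i].
      by exists i => //; rewrite in_setU1 iS orbT.
    by exists k; rewrite // in_setU1 eqxx.
  by [].
move=> i; rewrite in_setU1 => /orP[/eqP -> //|iS].
apply: (marg_trans cW' _ m1 (mW i iS)).
by apply/subsetP => v vi; apply/bigcupP; exists i.
Qed.

Lemma forward_gc : globally_consistent X R.
Proof.
have [[sy [_ [conn _]]] _] := jt.
case: (posnP m) => [m0|mpos].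
  exists (fun _ => 0); split; first exact: Krel0.
  by move=> [i lt]; exfalso; move: lt; rewrite m0.
pose i0 : 'I_m := Ordinal mpos.
have main : forall n (S : {set 'I_m}), (#|~: S| <= n)%N -> connS S -> consS S -> i0 \in S ->
    consS setT.
  elim=> [|n IH] S.
    rewrite leqn0 => /eqP/cards0_eq cS0 _ cS _.
    by move: cS; rewrite -[S]setCK cS0 setC0.
  move=> cn cS csS i0S.
  case: (S =P setT) => [eS|/eqP nT]; first by rewrite -eS.
  have [k0 k0S] : exists k0, k0 \notin S.
    apply/existsP; apply: contraNT nT => /existsPn H.
    by apply/eqP/setP => x; rewrite inE; apply/negPn/H.
  case: (boolP [exists x, exists y, [&& e x y, x \in S & y \notin S]]); last first.
    move/existsPn => H.
    have cl : closed e (mem S).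
      move=> x y exy; case xS: (x \in S); case yS: (y \in S) => //.
        by move: (H x) => /existsPn /(_ y); rewrite exy xS yS.
      by move: (H y) => /existsPn /(_ x); rewrite sy in exy; rewrite exy xS yS.
    by have := closed_connect cl (conn i0 k0); rewrite i0S (negbTE k0S).
  move=> /existsP [j /existsP [k /and3P [ejk jS kS]]].
  apply: (IH (k |: S)).
  - have h1 := cardsC S; have h2 := cardsC (k |: S).
    have h3 : #|k |: S| = #|S|.+1 by rewrite cardsU1 kS.
    rewrite card_ord in h1; rewrite card_ord in h2; rewrite h3 in h2.
    move: (#|~: S|) (#|~: (k |: S)|) (#|S|) cn h1 h2 => a b c; clear; lia.
  - exact: (connS_ext cS jS ejk).
  - exact: (consS_ext cS csS jS kS ejk).
  - by rewrite in_setU1 i0S orbT.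
have [W [kW mW]] : consS setT.
  apply: (main #|~: [set i0]| [set i0]) => //.
  - by move=> i j; rewrite !inE => /eqP -> /eqP ->; apply: connect0.
  - exists (R i0); rewrite big_set1; split; first exact: HK.
    by move=> i; rewrite inE => /eqP ->; apply: marg_self.
  - by rewrite inE.
exists W; split; last by move=> i; apply: mW; rewrite inE.
have -> : \bigcup_(i < m) X i = \bigcup_(i in [set: 'I_m]) X i.
  by apply: eq_bigl => i; rewrite inE.
by [].
Qed.

End Forward.

Lemma forward (K : nmodType) : positive_monoid K -> transportation_property K ->
  forall (A : finType) (m : nat) (X : 'I_m -> {set A}), acyclic X -> local_to_global K X.
Proof.
move=> pK trK A m X [e jt] Dom R HK Hpc.
exact: (forward_gc pK trK jt HK Hpc).
Qed.

Section GYO.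
Variables (A : finType) (m : nat) (X : 'I_m -> {set A}).
Local Notation I := ('I_m).

Definition vrel (f : rel I) v : rel I := fun x y => [&& f x y, v \in X x & v \in X y].
Definition del (f : rel I) i j : rel I :=
  fun x y => f x y && ~~ (((x == i) && (y == j)) || ((x == j) && (y == i))).
Definition addE (f : rel I) a b : rel I :=
  fun x y => [|| f x y, (x == a) && (y == b) | (x == b) && (y == a)].

Definition core (S : {set I}) (V : {set A}) :=
  [/\ (1 < #|S|)%N,
      forall j, exists2 k, k \in S & X j :&: V \subset X k :&: V,
      forall v, v \in V -> (1 < #|[set i in S | v \in X i]|)%N &
      forall i k, i \in S -> k \in S -> i != k -> ~~ (X i :&: V \subset X k :&: V)].

Record Inv (S : {set I}) (V : {set A}) (f : rel I) : Prop := {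
  i_sym : symmetric f;
  i_irr : irreflexive f;
  i_br : forall i j, f i j -> ~~ connect (del f i j) i j;
  i_root : forall x, exists2 s, s \in S & connect f x s;
  i_uniq : forall s1 s2, s1 \in S -> s2 \in S -> connect f s1 s2 -> s1 = s2;
  i_V : forall v i, v \in V -> v \in X i -> exists2 s, s \in S & (v \in X s) && connect (vrel f v) i s;
  i_nV : forall v i j, v \notin V -> v \in X i -> v \in X j -> connect (vrel f v) i j;
  i_C1 : forall j, exists2 k, k \in S & X j :&: V \subset X k :&: V
}.

Lemma conn_add (g : rel I) a b x y : connect (addE g a b) x y ->
  [\/ connect g x y, connect g x a && connect g b y | connect g x b && connect g a y].
Proof.
move=> /connectP [p pth ->].
elim: p x pth => [|z p IH] x /=; first by move=> _; apply: Or31; apply: connect0.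
move=> /andP [exz pz].
have := IH z pz; rewrite /addE in exz.
case/or3P: exz => [gxz|/andP[/eqP xa /eqP zb]|/andP[/eqP xb /eqP za]].
- have cxz := connect1 gxz.
  case=> [c|/andP[c1 c2]|/andP[c1 c2]].
  + by apply: Or31; apply: connect_trans c.
  + by apply: Or32; rewrite (connect_trans cxz c1) c2.
  + by apply: Or33; rewrite (connect_trans cxz c1) c2.
- subst x z; case=> [c|/andP[c1 c2]|/andP[c1 c2]].
  + by apply: Or32; rewrite connect0 c.
  + by apply: Or32; rewrite connect0 c2.
  + by apply: Or31.
- subst x z; case=> [c|/andP[c1 c2]|/andP[c1 c2]].
  + by apply: Or33; rewrite connect0 c.
  + by apply: Or31.
  + by apply: Or33; rewrite connect0 c2.
Qed.


Lemma conn_mono (e e' : rel I) x y : subrel e e' -> connect e x y -> connect e' x y.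
Proof. by move=> s; apply: connect_sub => a b /s; apply: connect1. Qed.

Lemma vrel_sym f v : symmetric f -> symmetric (vrel f v).
Proof.
by move=> sy x y; rewrite /vrel sy; case: (f y x); case: (v \in X x); case: (v \in X y).
Qed.

Lemma conn_symE (f : rel I) x y : symmetric f -> connect f x y = connect f y x.
Proof. by move=> sy; rewrite (sym_connect_sym sy). Qed.

Lemma le1_eq (S : {set I}) (P : pred I) x y : (#|[set i in S | P i]| <= 1)%N ->
  x \in S -> P x -> y \in S -> P y -> x = y.
Proof.
move=> /card_le1_eqP H xS Px yS Py; apply: esym; apply: H; by rewrite inE ?xS ?yS.
Qed.

Lemma Inv_init : Inv setT setT (fun _ _ => false).
Proof.
split => //.
- by move=> x; exists x; rewrite ?inE ?connect0.
- by move=> s1 s2 _ _ /connectP [[|z p] //= _ ->].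
- by move=> v i _ vi; exists i; rewrite ?inE // vi connect0.
- by move=> v i j; rewrite inE.
- by move=> j; exists j; rewrite ?inE.
Qed.

Lemma step_v S V f v : Inv S V f -> v \in V ->
  (#|[set i in S | v \in X i]| <= 1)%N -> Inv S (V :\ v) f.
Proof.
move=> [sy irr br root uq iV inV C1] vV le1; split => //.
- by move=> v' i; rewrite in_setD1 => /andP[_ v'V]; apply: iV.
- move=> v' i j; rewrite in_setD1 negb_and negbK => /orP[/eqP ->|v'V] vi vj; last first.
    by apply: inV.
  have [si siS /andP[vsi ci]] := iV v i vV vi.
  have [sj sjS /andP[vsj cj]] := iV v j vV vj.
  have e := le1_eq le1 siS vsi sjS vsj; subst sj.
  by apply: (connect_trans ci); rewrite conn_symE ?cj //; apply: vrel_sym.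
- move=> j; have [k kS sub] := C1 j; exists k => //.
  apply/subsetP => a; rewrite !inE => /and3P[aj av aV].
  have := subsetP sub a; rewrite !inE aj aV => /(_ erefl) /andP[-> _].
  by rewrite av.
Qed.

Lemma step_e S V f k k' : Inv S V f -> k \in S -> k' \in S -> k != k' ->
  X k :&: V \subset X k' :&: V -> Inv (S :\ k) V (addE f k k').
Proof.
move=> [sy irr br root uq iV inV C1] kS k'S nk sub.
have fsub : subrel f (addE f k k') by move=> x y fxy; rewrite /addE fxy.
have nkk : ~~ connect f k k'.
  by apply/negP => /(uq _ _ kS k'S) /eqP; rewrite (negbTE nk).
have delsub : subrel (del (addE f k k') k k') f.
  move=> x y; rewrite /del /addE => /andP[/or3P[//|H|H] /negP []]; by rewrite H ?orbT.
have delsub' : subrel (del (addE f k k') k' k) f.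
  move=> x y; rewrite /del /addE => /andP[/or3P[//|H|H] /negP []]; by rewrite H ?orbT.
split.
- move=> x y; rewrite /addE sy; congr (_ || _); rewrite orbC.
  by case: (x == k); case: (y == k'); case: (x == k'); case: (y == k).
- move=> x; rewrite /addE irr /=; apply/negP => /orP[]/andP[/eqP -> /eqP e];
    by rewrite e eqxx in nk.
- move=> i j; rewrite /addE => /or3P[fij|/andP[/eqP -> /eqP ->]|/andP[/eqP -> /eqP ->]].
  + apply/negP => c.
    have c' : connect (addE (del f i j) k k') i j.
      apply: conn_mono c => x y; rewrite /del /addE => /andP[/or3P[fxy|H|H] nd].
      * by rewrite fxy nd.
      * by rewrite H orbT.
      * by rewrite H !orbT.
    have dsub : subrel (del f i j) f by move=> x y /andP[].
    case: (conn_add c') => [c1|/andP[c1 c2]|/andP[c1 c2]].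
    * by move: (br i j fij); rewrite c1.
    * have f1 : connect f k i by rewrite conn_symE //; exact: conn_mono dsub c1.
      have f2 : connect f j k' by rewrite conn_symE //; exact: conn_mono dsub c2.
      by move: nkk; rewrite (connect_trans f1 (connect_trans (connect1 fij) f2)).
    * have f1 : connect f k' i by rewrite conn_symE //; exact: conn_mono dsub c1.
      have f2 : connect f j k by rewrite conn_symE //; exact: conn_mono dsub c2.
      by move: nkk; rewrite conn_symE // (connect_trans f1 (connect_trans (connect1 fij) f2)).
  + by apply/negP => /(conn_mono delsub); apply/negP.
  + apply/negP => /(conn_mono delsub'); rewrite conn_symE //; by apply/negP.
- move=> x; have [s sS c] := root x.
  case: (s =P k) => [esk|/eqP nsk].
    exists k'; first by rewrite in_setD1 eq_sym nk k'S.
    subst s; apply: (@connect_trans _ _ k); first exact: conn_mono c.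
    by apply: connect1; rewrite /addE !eqxx orbT.
  by exists s; [rewrite in_setD1 nsk sS | apply: conn_mono c].
- move=> s1 s2; rewrite !in_setD1 => /andP[n1 s1S] /andP[n2 s2S] /conn_add.
  case=> [c|/andP[c1 c2]|/andP[c1 c2]].
  + exact: uq.
  + by have e := uq _ _ s1S kS c1; rewrite e eqxx in n1.
  + by have e := uq _ _ kS s2S c2; rewrite e eqxx in n2.
- move=> v i vV vi; have [s sS /andP[vs c]] := iV v i vV vi.
  have cv : connect (vrel (addE f k k') v) i s.
    by apply: conn_mono c => x y /and3P[fxy vx vy]; rewrite /vrel (fsub _ _ fxy) vx vy.
  case: (s =P k) => [esk|/eqP nsk]; last by exists s; rewrite ?in_setD1 ?nsk ?sS ?vs.
  subst s.
  have vk' : v \in X k'.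
    by have := subsetP sub v; rewrite !inE vs vV => /(_ erefl) /andP[].
  exists k'; first by rewrite in_setD1 eq_sym nk k'S.
  rewrite vk' /=; apply: (connect_trans cv); apply: connect1.
  by rewrite /vrel /addE !eqxx vs vk' orbT.
- move=> v i j vV vi vj; apply: conn_mono (inV v i j vV vi vj) => x y /and3P[fxy vx vy].
  by rewrite /vrel (fsub _ _ fxy) vx vy.
- move=> j; have [k0 k0S s0] := C1 j.
  case: (k0 =P k) => [ek|/eqP nk0]; last by exists k0; rewrite ?in_setD1 ?nk0.
  exists k'; first by rewrite in_setD1 eq_sym nk k'S.
  by apply: subset_trans sub; rewrite -ek.
Qed.


Lemma term_acyclic (S : {set I}) (V : {set A}) (f : rel I) : Inv S V f -> (#|S| <= 1)%N -> acyclic X.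
Proof.
move=> [sy irr br root uq iV inV C1] le1.
have le1' : (#|[set i in S | true]| <= 1)%N.
  by apply: leq_trans le1; apply: subset_leq_card; apply/subsetP => x; rewrite inE => /andP[].
exists f; split; first split=> //; first split=> //; first split=> //.
  move=> i j; have [si siS ci] := root i; have [sj sjS cj] := root j.
  have e := le1_eq le1' siS erefl sjS erefl; subst sj.
  by apply: (connect_trans ci); rewrite conn_symE.
move=> v i j vi vj.
case vV: (v \in V); last by apply: inV; rewrite ?vV.
have [si siS /andP[vsi ci]] := iV v i vV vi.
have [sj sjS /andP[vsj cj]] := iV v j vV vj.
have e := le1_eq le1' siS erefl sjS erefl; subst sj.
by apply: (connect_trans ci); rewrite conn_symE //; apply: vrel_sym.
Qed.

Lemma term_core (S : {set I}) (V : {set A}) (f : rel I) : Inv S V f -> (1 < #|S|)%N ->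
  ~~ [exists v in V, #|[set i in S | v \in X i]| <= 1]%N ->
  ~~ [exists k in S, exists k' in S, (k != k') && (X k :&: V \subset X k' :&: V)] ->
  core S V.
Proof.
move=> [sy irr br root uq iV inV C1] lt /exists_inPn Hv /exists_inPn Hk; split=> //.
- by move=> v vV; rewrite ltnNge; apply: Hv.
- move=> i k iS kS nik; move: (Hk i iS) => /exists_inPn /(_ k kS).
  by rewrite nik.
Qed.

Lemma gyo_main n (S : {set I}) (V : {set A}) (f : rel I) : (#|S| + #|V| <= n)%N -> Inv S V f ->
  acyclic X \/ exists S V, core S V.
Proof.
elim: n S V f => [|n IH] S V f sz inv.
  have S0 : #|S| = 0%N by move: sz; rewrite leqn0 addn_eq0 => /andP[/eqP].
  by left; apply: (term_acyclic inv); rewrite S0.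
case: (boolP [exists v in V, #|[set i in S | v \in X i]| <= 1]%N) => [/exists_inP [v vV le1]|Hv].
  apply: (IH S (V :\ v) f); last exact: step_v.
  have := cardsD1 v V; rewrite vV /=; move: sz; clear; move: #|S| #|V| #|V :\ v| => a b c; lia.
case: (boolP [exists k in S, exists k' in S, (k != k') && (X k :&: V \subset X k' :&: V)]) =>
  [/exists_inP [k kS /exists_inP [k' k'S /andP[nk sub]]]|Hk].
  apply: (IH (S :\ k) V (addE f k k')); last exact: step_e.
  have := cardsD1 k S; rewrite kS /=; move: sz; clear; move: #|S| #|V| #|S :\ k| => a b c; lia.
case: (leqP #|S| 1) => [le1|lt1].
  by left; apply: (term_acyclic inv).
by right; exists S, V; apply: (term_core inv).
Qed.

Lemma gyo : acyclic X \/ exists S V, core S V.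
Proof. exact: (gyo_main (leqnn _) Inv_init). Qed.

End GYO.

Section CE.
Variables (A : finType) (m : nat) (X : 'I_m -> {set A}) (S : {set 'I_m}) (V : {set A}).
Hypothesis hc : core X S V.
Local Notation q := (m`!).+1.
Local Notation Z := 'Z_q.
Local Notation G := {ffun A -> Z}.

Definition dg v := #|[set i in S | v \in X i]|.
Definition coef (i : 'I_m) (v : A) : Z :=
  if [&& v \in V, i \in S & v \in X i] then
    (if [pick j in S | v \in X j] == Some i then - ((dg v).-1)%:R else 1) else 0.
Definition Lf (i : 'I_m) (g : G) : Z := \sum_(v : A) coef i v * g v.

Lemma q_gt1 : (1 < q)%N.
Proof. by rewrite ltnS fact_gt0. Qed.

Lemma coef0 i v : v \notin X i -> coef i v = 0.
Proof. by rewrite /coef => /negbTE ->; rewrite !andbF. Qed.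

Lemma dg_le v : (dg v <= m)%N.
Proof. by rewrite /dg -[X in (_ <= X)%N]card_ord; apply: max_card. Qed.

Lemma coef_unit i v : i \in S -> v \in X i -> v \in V -> coef i v \is a GRing.unit.
Proof.
move=> iS vi vV; rewrite /coef vV iS vi /=; case: ifP => _; last exact: unitr1.
rewrite unitrN unitZpE; last exact: q_gt1.
have [_ _ C2 _] := hc; have d2 := C2 v vV.
have hd : (0 < (dg v).-1 <= m)%N by move: (dg_le v); rewrite /dg; lia.
by apply: (coprime_dvdr (dvdn_fact hd)); apply: coprimeSn.
Qed.

Lemma coef_sum v : \sum_(i in S) coef i v = 0.
Proof.
case vV: (v \in V); last by rewrite big1 // => i _; rewrite /coef vV.
have [_ _ C2 _] := hc; have d2 := C2 v vV.
rewrite (bigID (fun i => v \in X i)) /= [X in _ + X]big1 ?addr0; last first.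
  by move=> i /andP[_ /negbTE vi]; rewrite /coef vi !andbF.
case e: [pick j in S | v \in X j] => [i1|]; last first.
  move: e; case: pickP => // none _.
  move: d2; rewrite /dg; suff -> : [set i in S | v \in X i] = set0 by rewrite cards0.
  by apply/setP => i; rewrite !inE; apply: none.
have /andP[i1S vi1] : (i1 \in S) && (v \in X i1).
  by move: e; case: pickP => // x Px [<-].
rewrite (bigD1 i1) /=; last by rewrite i1S vi1.
rewrite /coef vV i1S vi1 e eqxx /=.
rewrite (eq_bigr (fun _ => 1)); last first.
  move=> i /andP[/andP[iS vi] ni]; rewrite iS vi /=.
  by case: ifP => // /eqP [] /eqP; rewrite eq_sym (negbTE ni).
rewrite sumr_const.
have hc1 : dg v = (#|[set i in S | v \in X i] :\ i1|).+1.
  by rewrite /dg (cardsD1 i1) !inE i1S vi1.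
have -> : #|[pred i | (i \in S) && (v \in X i) && (i != i1)]| = (dg v).-1.
  rewrite hc1 /=.
  apply: eq_card => i; rewrite !inE; by case: (i == i1); case: (i \in S); case: (v \in X i).
by rewrite addrC -[1 *+ _]/(((dg v).-1)%:R) subrr.
Qed.

Definition shift (v0 : A) (d : Z) (g : G) : G := [ffun v => if v == v0 then g v + d else g v].

Lemma shift_inj v0 d : injective (shift v0 d).
Proof.
move=> g1 g2 /ffunP e; apply/ffunP => v; have := e v; rewrite !ffunE.
by case: ifP => // _ /addIr.
Qed.

Lemma L_shift i v0 d g : Lf i (shift v0 d g) = Lf i g + coef i v0 * d.
Proof.
rewrite /Lf.
have -> : \sum_v coef i v * shift v0 d g v =
          \sum_v (coef i v * g v + (if v == v0 then coef i v * d else 0)).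
  by apply: eq_bigr => v _; rewrite ffunE; case: ifP; rewrite ?mulrDr ?addr0.
by rewrite big_split /= -big_mkcond big_pred1_eq.
Qed.

Definition DomZ : A -> eqType := fun _ => (Z : eqType).

Definition projZ (Y : {set A}) (g : G) : tup DomZ :=
  [ffun a => if a \in Y then Some (g a) else None].

Lemma projZ_shift (Y : {set A}) (v0 : A) (d : Z) (g : G) : v0 \notin Y -> projZ Y (shift v0 d g) = projZ Y g.
Proof.
move=> nv; apply/ffunP => a; rewrite !ffunE; case: ifP => // aY.
by case: (a =P v0) => // e; subst a; rewrite aY in nv.
Qed.

Lemma count_sol i v0 (Y : {set A}) t c : i \in S -> v0 \in X i -> v0 \in V -> v0 \notin Y ->
  (#|[set g : G | (projZ Y g == t) && (Lf i g == c)]| * #|{: Z}|)%N =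
  #|[set g : G | projZ Y g == t]|.
Proof.
move=> iS vi vV nvY.
pose P c := [set g : G | (projZ Y g == t) && (Lf i g == c)].
have u := coef_unit iS vi vV.
have le : forall c c', (#|P c| <= #|P c'|)%N.
  move=> c1 c2; pose d := (c2 - c1) / coef i v0.
  rewrite -(card_imset (P c1) (@shift_inj v0 d)); apply: subset_leq_card.
  apply/subsetP => g' /imsetP [g gP ->]; move: gP; rewrite !inE => /andP[pt /eqP Lc].
  rewrite projZ_shift // pt L_shift Lc /= /d mulrC (divrK u).
  by rewrite addrC subrK.
have eqc : forall c c', #|P c| = #|P c'| by move=> c1 c2; apply/eqP; rewrite eqn_leq !le.
rewrite -[#|[set g : G | projZ Y g == t]|]sum1_card (partition_big (fun g => Lf i g) xpredT) //=.
rewrite (eq_bigr (fun _ => #|P c|)); last first.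
  move=> c' _; rewrite (eqc c c') -sum1_card; apply: eq_bigl => g; by rewrite /P !inE.
by rewrite sum_nat_const mulnC.
Qed.

End CE.

Section Push.
Variables (A : finType) (Dom : A -> eqType) (K : nmodType) (G : finType).
Local Notation T := (tup Dom).

Lemma fin_witness (P : pred G) (w : G -> K) : \sum_(g | P g) w g != 0 -> exists g, P g.
Proof.
move=> nz; case: (pickP P) => [g Pg|none]; first by exists g.
by move: nz; rewrite big_pred0 ?eqxx.
Qed.

Lemma push_marg (F F' : G -> T) (w : G -> K) (Y : {set A}) :
  (forall g, restr Y (F g) = F' g) ->
  marginal_is (fun t => \sum_(g | F g == t) w g) Y (fun t => \sum_(g | F' g == t) w g).
Proof.
move=> HF.
have c : cover (fun t => \sum_(g | F g == t) w g) (map F (enum G)).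
  move=> t /fin_witness [g /eqP <-]; apply: map_f; by rewrite mem_enum.
apply/(marginal_isP _ _ c) => t; rewrite /marg.
rewrite [RHS](eq_bigr (fun r => \sum_g (if F g == r then w g else 0))); last first.
  by move=> r _; rewrite big_mkcond.
rewrite exchange_big /= [LHS]big_mkcond; apply: eq_bigr => g _.
rewrite big_mkcond (bigD1_seq (F g)) ?undup_uniq //=; last first.
  by rewrite mem_undup; apply: map_f; rewrite mem_enum.
rewrite eqxx HF big1 ?addr0 // => r /negPf ne.
by case: ifP => // _; rewrite eq_sym ne.
Qed.

End Push.

Section CEK.
Variables (K : nmodType) (pK : positive_monoid K) (p : K) (pnz : p != 0).
Variables (A : finType) (m : nat) (X : 'I_m -> {set A}) (S : {set 'I_m}) (V : {set A}).
Hypothesis hc : core X S V.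
Variables (i0 : 'I_m) (i0S : i0 \in S).
Local Notation q := (m`!).+1.
Local Notation Z := 'Z_q.
Local Notation G := {ffun A -> Z}.

Definition cc (k : 'I_m) : Z := if k == i0 then 1 else 0.
Definition wt (k : 'I_m) (g : G) : K := if Lf X S V k g == cc k then p else 0.
Definition rep (j : 'I_m) := if j \in S then j else odflt i0 [pick k in S | X j :&: V \subset X k :&: V].
Definition Rc (j : 'I_m) (t : tup (@DomZ A m)) : K := \sum_(g : G | projZ (X j) g == t) wt (rep j) g.

Lemma rep_id k : k \in S -> rep k = k.
Proof. by rewrite /rep => ->. Qed.

Lemma rep_prop j : rep j \in S /\ X j :&: V \subset X (rep j) :&: V.
Proof.
rewrite /rep; case: ifP => [jS|_]; first by [].
case: pickP => [k /andP[kS sub]|none] //=.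
have [_ C1 _ _] := hc; have [k kS sub] := C1 j.
by move: (none k); rewrite kS sub.
Qed.

Lemma natmul_nz n : p *+ n = 0 -> n = 0%N.
Proof. by case: n => // n; rewrite mulrS => /pK [e _]; move: pnz; rewrite e eqxx. Qed.

Lemma projZ_restr (Y Y' : {set A}) (g : G) : restr Y (projZ Y' g) = projZ (Y :&: Y') g.
Proof. apply/ffunP => a; rewrite !ffunE inE; by case: (a \in Y); case: (a \in Y'). Qed.

Lemma Rc_Krel j : Krel (X j) (Rc j).
Proof.
split.
  exists (map (projZ (X j)) (enum G)) => t /fin_witness [g /eqP <-].
  by apply: map_f; rewrite mem_enum.
move=> t /fin_witness [g /eqP <-] a; rewrite ffunE; by case: (a \in X j).
Qed.

Lemma Rc_marg j (Y : {set A}) :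
  marginal_is (Rc j) Y (fun t => \sum_(g : G | projZ (Y :&: X j) g == t) wt (rep j) g).
Proof. by apply: push_marg => g; rewrite projZ_restr. Qed.

Lemma sum_wt k (Y : {set A}) t :
  \sum_(g : G | projZ Y g == t) wt k g = p *+ #|[set g : G | (projZ Y g == t) && (Lf X S V k g == cc k)]|.
Proof.
rewrite -sumr_const [LHS]big_mkcond [RHS]big_mkcond /=; apply: eq_bigr => g _.
by rewrite inE /wt; case: (projZ Y g == t); case: (Lf X S V k g == cc k).
Qed.

Lemma nsub_wit (Y1 Y2 : {set A}) : ~~ (Y1 \subset Y2) -> exists2 v, v \in Y1 & v \notin Y2.
Proof. by move=> /subsetPn [v ? ?]; exists v. Qed.

Lemma marg_agree j j' t :
  \sum_(g : G | projZ ((X j :&: X j') :&: X j) g == t) wt (rep j) g =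
  \sum_(g : G | projZ ((X j :&: X j') :&: X j') g == t) wt (rep j') g.
Proof.
have -> : (X j :&: X j') :&: X j = X j :&: X j' by rewrite setIC setIA setIid.
have -> : (X j :&: X j') :&: X j' = X j :&: X j' by rewrite -setIA setIid.
have [kS subk] := rep_prop j; have [k'S subk'] := rep_prop j'.
set k := rep j in kS subk *; set k' := rep j' in k'S subk' *.
case: (k =P k') => [-> //|/eqP nk].
have [_ _ _ C3] := hc.
have [v0 v0k v0k'] := nsub_wit (C3 _ _ kS k'S nk).
have nk' : k' != k by rewrite eq_sym.
have [v1 v1k' v1k] := nsub_wit (C3 _ _ k'S kS nk').
move: v0k v1k'; rewrite !inE => /andP[v0Xk v0V] /andP[v1Xk' v1V].
have v0Y : v0 \notin X j :&: X j'.
  apply/negP; rewrite inE => /andP[_ v0j']; move: v0k'.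
  by rewrite (subsetP subk' v0) ?inE ?v0j' ?v0V.
have v1Y : v1 \notin X j :&: X j'.
  apply/negP; rewrite inE => /andP[v1j _]; move: v1k.
  by rewrite (subsetP subk v1) ?inE ?v1j ?v1V.
rewrite !sum_wt; congr (_ *+ _).
have Z0 : (0 < #|{: Z}|)%N by apply/card_gt0P; exists 0.
apply/eqP; rewrite -(eqn_pmul2r Z0).
by rewrite (count_sol hc _ _ kS v0Xk v0V v0Y) (count_sol hc _ _ k'S v1Xk' v1V v1Y).
Qed.


Lemma Rc_pc : transportation_property K -> pairwise_consistent X Rc.
Proof.
move=> trK j j'.
have m1 := @Rc_marg j (X j :&: X j').
have m2 := @Rc_marg j' (X j :&: X j').
have E : (fun t => \sum_(g : G | projZ ((X j :&: X j') :&: X j') g == t) wt (rep j') g) =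
         (fun t => \sum_(g : G | projZ ((X j :&: X j') :&: X j) g == t) wt (rep j) g).
  by apply: functional_extensionality => t; rewrite marg_agree.
rewrite E in m2.
exact: (glue pK trK (Rc_Krel j) (Rc_Krel j') m1 m2).
Qed.

Lemma count_pos (Y : {set A}) t k : (0 < #|[set g : G | (projZ Y g == t) && (Lf X S V k g == cc k)]|)%N ->
  exists g : G, projZ Y g = t /\ Lf X S V k g = cc k.
Proof. by move=> /card_gt0P [g]; rewrite inE => /andP[/eqP ? /eqP ?]; exists g. Qed.

Lemma Rc_not_gc : ~ globally_consistent X Rc.
Proof.
move=> [W [kW mW]].
have [sW cW] := Krel_cover kW.
have [C0 _ _ C3] := hc.
have [k1 k1S nk1] : exists2 k1, k1 \in S & k1 != i0.
  have : (0 < #|S :\ i0|)%N by move: C0; rewrite (cardsD1 i0) i0S add1n ltnS.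
  by move=> /card_gt0P [k1]; rewrite in_setD1 => /andP[? ?]; exists k1.
have ni0 : i0 != k1 by rewrite eq_sym.
have [v0 v0i v0k] := nsub_wit (C3 _ _ i0S k1S ni0).
move: v0i; rewrite inE => /andP[v0X v0V].
pose z0 : G := [ffun => 0].
have [g0 [_ Lg0]] : exists g : G, projZ set0 g = projZ set0 z0 /\ Lf X S V i0 g = cc i0.
  apply: count_pos.
  have n0 : v0 \notin (set0 : {set A}) by rewrite in_set0.
  have := count_sol hc (projZ set0 z0) (cc i0) i0S v0X v0V n0.
  have -> : #|[set g : G | projZ set0 g == projZ set0 z0]| = #|G|.
    apply: eq_card => g; rewrite !inE; apply/eqP/ffunP => a; by rewrite !ffunE in_set0.
  have : (0 < #|G|)%N by apply/card_gt0P; exists z0.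
  by move=> pos e; move: pos; rewrite -e muln_gt0 => /andP[].
have Rc_nz : forall i t, i \in S -> Rc i t != 0 ->
    exists g : G, projZ (X i) g = t /\ Lf X S V i g = cc i.
  move=> i t iS; rewrite /Rc sum_wt rep_id // => nz; apply: count_pos.
  by rewrite lt0n; apply/eqP => e0; move: nz; rewrite e0 eqxx.
have [sW' cW'] := Krel_cover kW.
have nz0 : Rc i0 (projZ (X i0) g0) != 0.
  rewrite /Rc sum_wt rep_id //; apply/eqP => /natmul_nz /eqP; rewrite cards_eq0 => /eqP e.
  by have := in_set0 g0; rewrite -e inE eqxx Lg0 eqxx.
have := nz0; rewrite ((marginal_isP _ _ cW).1 (mW i0)).
move=> /sum_witness [r rs /andP[_ Wr]].
have hr : forall i, i \in S -> exists g : G, projZ (X i) g = restr (X i) r /\ Lf X S V i g = cc i.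
  move=> i iS; apply: Rc_nz => //.
  rewrite ((marginal_isP _ _ cW).1 (mW i)); apply/eqP => /(pos_sum pK) H.
  by move: Wr; rewrite (H r rs (eqxx _)) eqxx.
pose gs : G := [ffun v => odflt 0 (r v)].
have hL : forall i, i \in S -> Lf X S V i gs = cc i.
  move=> i iS; have [g [pg Lg]] := hr i iS; rewrite -Lg /Lf; apply: eq_bigr => v _.
  case vi: (v \in X i); last by rewrite coef0 ?vi ?mul0r.
  have := congr1 (fun f : tup (@DomZ A m) => f v) pg; rewrite !ffunE vi => <- //.
have : \sum_(i in S) Lf X S V i gs = 1.
  rewrite (eq_bigr (fun i => cc i)); last by move=> i iS; apply: hL.
  rewrite (bigD1 i0) //= big1 ?addr0 /cc ?eqxx // => i /andP[_ ni].
  by rewrite (negbTE ni).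
rewrite /Lf exchange_big /=.
rewrite big1 => [/eqP|v _]; first by rewrite eq_sym oner_eq0.
by rewrite -mulr_suml coef_sum ?mul0r.
Qed.

End CEK.

Lemma core_not_l2g (K : nmodType) : nontrivial_monoid K -> positive_monoid K ->
  transportation_property K ->
  forall (A : finType) (m : nat) (X : 'I_m -> {set A}) S V, core X S V -> ~ local_to_global K X.
Proof.
move=> [p pnz] pK trK A m X S V hc l2g.
have [C0 _ _ _] := hc.
have [i0 i0S] : exists i0, i0 \in S by apply/card_gt0P; apply: ltn_trans C0.
apply: (Rc_not_gc pK pnz hc i0S).
apply: l2g; first by move=> j; apply: Rc_Krel.
exact: (Rc_pc pK p hc i0 trK).
Qed.

Local Close Scope ring_scope.

Theorem corollary18 (K : nmodType) :
  nontrivial_monoid K -> positive_monoid K -> transportation_property K ->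
  forall (A : finType) (m : nat) (X : 'I_m -> {set A}),
    acyclic X <-> local_to_global K X.
Proof.
move=> nt pK trK A m X; split; first exact: forward.
move=> l2g; case: (gyo X) => // [[S [V hc]]].
exfalso; exact: (core_not_l2g nt pK trK hc l2g).
Qed.
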